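(* Let $r\in\{0,1\}$ and let $k,l,a_1,a_2,C_1,C_2,a,b,c,b_1,c_1$ be real constants. Put $\alpha(t)=kt+l$, $X=x\cos\alpha+y\sin\alpha$, $Y=-x\sin\alpha+y\cos\alpha$, $\mathbf e_1=(\cos\alpha,\sin\alpha,0)^t$, $\mathbf e_2=(-\sin\alpha,\cos\alpha,0)^t$, and define functions of $Y$: if $r=0$: $\phi=e^{a_1Y}-ae^{-a_1Y}$, $\psi=e^{a_1Y}+ae^{-a_1Y}$, $\xi=be^{a_1Y}-ce^{-a_1Y}$, $\zeta=be^{a_1Y}+ce^{-a_1Y}$, $\vartheta=b_1e^{a_1Y}-c_1e^{-a_1Y}$; if $r=1$: $\phi=\sin(a_1Y)$, $\psi=\cos(a_1Y)$, $\xi=c\sin(a_1Y+b)$, $\zeta=c\cos(a_1Y+b)$, $\vartheta=c_1\sin(a_1Y+b_1)$. Let $$W_1=a_1\big(\vartheta+a_2Y\phi-X\zeta-a_1a_2X^2\psi\big),\qquad W_2=\xi+2a_1a_2X\phi,$$ and $$\mathbf v=k(-y,x,0)^t+C_1e^{(-1)^r\nu a_1^2t}\big(W_1\mathbf e_1+W_2\mathbf e_2\big),\qquad \mathbf H=C_2e^{(-1)^r\eta a_1^2t}\big(W_1\mathbf e_1+W_2\mathbf e_2\big).$$ Then there exists a smooth function $p$ on $\mathbb R\times\mathbb R^3$ such that $(\mathbf v,\mathbf H,p)$ satisfies the MHD system on $\mathbb R\times\mathbb R^3$.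
   Context: Throughout, $\nu,\eta,\mu_0,\rho$ are positive constants. The MHD system for $\mathbf v=(u,v,w)^t$, $\mathbf H=(H^1,H^2,H^3)^t$, $p$, functions of $(t,x,y,z)$, is $$\nabla\cdot\mathbf v=0,\quad \mathbf v_t+(\mathbf v\cdot\nabla)\mathbf v-\mu_0(\mathbf H\times\operatorname{rot}\mathbf H)+\tfrac1\rho\nabla p=\nu\Delta\mathbf v,\quad \nabla\cdot\mathbf H=0,\quad \mathbf H_t=\operatorname{rot}(\mathbf v\times\mathbf H)+\eta\Delta\mathbf H,$$ with $\operatorname{rot}$ the curl and $\Delta$ the componentwise Laplacian in $(x,y,z)$. Here $X,Y,\mathbf e_1,\mathbf e_2$ depend on $t$ through $\alpha(t)=kt+l$. *)

(* Defs.v *)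
From Stdlib Require Import Reals List ClassicalEpsilon.
Open Scope R_scope.

(** Scalar functions of (t, x, y, z). *)
Definition F4 := R -> R -> R -> R -> R.

Inductive dir := Dt | Dx | Dy | Dz.

Definition line (d : dir) (f : F4) (t x y z : R) : R -> R :=
  match d with
  | Dt => fun s => f s x y z
  | Dx => fun s => f t s y z
  | Dy => fun s => f t x s z
  | Dz => fun s => f t x y s
  end.

Definition coord (d : dir) (t x y z : R) : R :=
  match d with Dt => t | Dx => x | Dy => y | Dz => z end.

Definition is_partial (d : dir) (f g : F4) : Prop :=
  forall t x y z, derivable_pt_lim (line d f t x y z) (coord d t x y z) (g t x y z).

(** The partial derivative operator (meaningful where the derivative exists). *)
Definition pd (d : dir) (f : F4) : F4 :=
  fun t x y z => epsilon (inhabits 0)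
    (fun l => derivable_pt_lim (line d f t x y z) (coord d t x y z) l).

Definition cont4 (f : F4) : Prop :=
  forall t x y z eps, 0 < eps -> exists delta, 0 < delta /\
    forall t' x' y' z', Rabs (t' - t) < delta -> Rabs (x' - x) < delta ->
      Rabs (y' - y) < delta -> Rabs (z' - z) < delta ->
      Rabs (f t' x' y' z' - f t x y z) < eps.

Inductive iter_partial : list dir -> F4 -> F4 -> Prop :=
  | ip_nil : forall f, iter_partial nil f f
  | ip_cons : forall d ds f f' g,
      is_partial d f f' -> iter_partial ds f' g -> iter_partial (d :: ds) f g.

Definition smooth (f : F4) : Prop :=
  forall ds : list dir, exists g, iter_partial ds f g /\ cont4 g.

Record vec := mkvec { cx : F4; cy : F4; cz : F4 }.

Definition smooth_vec (V : vec) : Prop :=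
  smooth (cx V) /\ smooth (cy V) /\ smooth (cz V).

Definition divg (V : vec) : F4 := fun t x y z =>
  pd Dx (cx V) t x y z + pd Dy (cy V) t x y z + pd Dz (cz V) t x y z.

Definition rot (V : vec) : vec := mkvec
  (fun t x y z => pd Dy (cz V) t x y z - pd Dz (cy V) t x y z)
  (fun t x y z => pd Dz (cx V) t x y z - pd Dx (cz V) t x y z)
  (fun t x y z => pd Dx (cy V) t x y z - pd Dy (cx V) t x y z).

Definition cross (V W : vec) : vec := mkvec
  (fun t x y z => cy V t x y z * cz W t x y z - cz V t x y z * cy W t x y z)
  (fun t x y z => cz V t x y z * cx W t x y z - cx V t x y z * cz W t x y z)
  (fun t x y z => cx V t x y z * cy W t x y z - cy V t x y z * cx W t x y z).

Definition lap (f : F4) : F4 := fun t x y z =>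
  pd Dx (pd Dx f) t x y z + pd Dy (pd Dy f) t x y z + pd Dz (pd Dz f) t x y z.

Definition advect (V : vec) (f : F4) : F4 := fun t x y z =>
  cx V t x y z * pd Dx f t x y z + cy V t x y z * pd Dy f t x y z
  + cz V t x y z * pd Dz f t x y z.

(** One component (selected by [sel], with matching spatial direction [d]) of
    v_t + (v.grad)v - mu0 (H x rot H) + (1/rho) grad p = nu Lap v. *)
Definition momentum_comp (nu mu0 rho : R) (sel : vec -> F4) (d : dir)
  (v H : vec) (p : F4) (t x y z : R) : Prop :=
  pd Dt (sel v) t x y z + advect v (sel v) t x y z
  - mu0 * sel (cross H (rot H)) t x y z + / rho * pd d p t x y z
  = nu * lap (sel v) t x y z.

Definition induction_comp (eta : R) (sel : vec -> F4) (v H : vec) (t x y z : R) : Prop :=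
  pd Dt (sel H) t x y z = sel (rot (cross v H)) t x y z + eta * lap (sel H) t x y z.

Definition MHD (nu eta mu0 rho : R) (v H : vec) (p : F4) : Prop :=
  forall t x y z,
    divg v t x y z = 0 /\
    momentum_comp nu mu0 rho cx Dx v H p t x y z /\
    momentum_comp nu mu0 rho cy Dy v H p t x y z /\
    momentum_comp nu mu0 rho cz Dz v H p t x y z /\
    divg H t x y z = 0 /\
    induction_comp eta cx v H t x y z /\
    induction_comp eta cy v H t x y z /\
    induction_comp eta cz v H t x y z.

Definition alph (k l t : R) : R := k * t + l.
Definition Xc (k l t x y : R) : R := x * cos (alph k l t) + y * sin (alph k l t).
Definition Yc (k l t x y : R) : R := - x * sin (alph k l t) + y * cos (alph k l t).

Definition phiF (r : nat) (a1 a Y : R) : R :=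
  match r with O => exp (a1 * Y) - a * exp (- (a1 * Y)) | _ => sin (a1 * Y) end.
Definition psiF (r : nat) (a1 a Y : R) : R :=
  match r with O => exp (a1 * Y) + a * exp (- (a1 * Y)) | _ => cos (a1 * Y) end.
Definition xiF (r : nat) (a1 b c Y : R) : R :=
  match r with O => b * exp (a1 * Y) - c * exp (- (a1 * Y))
             | _ => c * sin (a1 * Y + b) end.
Definition zetaF (r : nat) (a1 b c Y : R) : R :=
  match r with O => b * exp (a1 * Y) + c * exp (- (a1 * Y))
             | _ => c * cos (a1 * Y + b) end.
Definition thetaF (r : nat) (a1 b1 c1 Y : R) : R :=
  match r with O => b1 * exp (a1 * Y) - c1 * exp (- (a1 * Y))
             | _ => c1 * sin (a1 * Y + b1) end.

Definition W1 (r : nat) (a1 a2 a b c b1 c1 X Y : R) : R :=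
  a1 * (thetaF r a1 b1 c1 Y + a2 * Y * phiF r a1 a Y - X * zetaF r a1 b c Y
        - a1 * a2 * X ^ 2 * psiF r a1 a Y).
Definition W2 (r : nat) (a1 a2 a b c X Y : R) : R :=
  xiF r a1 b c Y + 2 * a1 * a2 * X * phiF r a1 a Y.

(** Components of W1 e1 + W2 e2 (third component is 0). *)
Definition S1 (r : nat) (k l a1 a2 a b c b1 c1 t x y : R) : R :=
  let X := Xc k l t x y in let Y := Yc k l t x y in
  W1 r a1 a2 a b c b1 c1 X Y * cos (alph k l t) - W2 r a1 a2 a b c X Y * sin (alph k l t).
Definition S2 (r : nat) (k l a1 a2 a b c b1 c1 t x y : R) : R :=
  let X := Xc k l t x y in let Y := Yc k l t x y in
  W1 r a1 a2 a b c b1 c1 X Y * sin (alph k l t) + W2 r a1 a2 a b c X Y * cos (alph k l t).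

Definition vsol (nu : R) (r : nat) (k l a1 a2 C1 a b c b1 c1 : R) : vec := mkvec
  (fun t x y z => k * (- y) + C1 * exp ((-1) ^ r * nu * a1 ^ 2 * t) * S1 r k l a1 a2 a b c b1 c1 t x y)
  (fun t x y z => k * x + C1 * exp ((-1) ^ r * nu * a1 ^ 2 * t) * S2 r k l a1 a2 a b c b1 c1 t x y)
  (fun t x y z => 0).

Definition Hsol (eta : R) (r : nat) (k l a1 a2 C2 a b c b1 c1 : R) : vec := mkvec
  (fun t x y z => C2 * exp ((-1) ^ r * eta * a1 ^ 2 * t) * S1 r k l a1 a2 a b c b1 c1 t x y)
  (fun t x y z => C2 * exp ((-1) ^ r * eta * a1 ^ 2 * t) * S2 r k l a1 a2 a b c b1 c1 t x y)
  (fun t x y z => 0).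

(* Main.v *)
Require Import Defs.
From Stdlib Require Import Reals.
From Stdlib Require Import Lra Nsatz FunctionalExtensionality ClassicalEpsilon.
Import Defs.
Open Scope R_scope.

Lemma Dc (c x : R) : derivable_pt_lim (fun _ => c) x 0.
Proof. apply derivable_pt_lim_const. Qed.
Lemma Did (x : R) : derivable_pt_lim (fun s => s) x 1.
Proof. apply derivable_pt_lim_id. Qed.
Lemma Dplus a b x la lb : derivable_pt_lim a x la -> derivable_pt_lim b x lb ->
  derivable_pt_lim (fun s => a s + b s) x (la + lb).
Proof. intros; apply (derivable_pt_lim_plus a b); auto. Qed.
Lemma Dminus a b x la lb : derivable_pt_lim a x la -> derivable_pt_lim b x lb ->
  derivable_pt_lim (fun s => a s - b s) x (la - lb).
Proof. intros; apply (derivable_pt_lim_minus a b); auto. Qed.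
Lemma Dopp a x la : derivable_pt_lim a x la ->
  derivable_pt_lim (fun s => - a s) x (- la).
Proof. intros; apply (derivable_pt_lim_opp a); auto. Qed.
Lemma Dmult a b x la lb : derivable_pt_lim a x la -> derivable_pt_lim b x lb ->
  derivable_pt_lim (fun s => a s * b s) x (la * b x + a x * lb).
Proof. intros; apply (derivable_pt_lim_mult a b); auto. Qed.
Lemma Dcomp (F DF : R -> R) a x la : (forall y, derivable_pt_lim F y (DF y)) ->
  derivable_pt_lim a x la -> derivable_pt_lim (fun s => F (a s)) x (DF (a x) * la).
Proof. intros HF Ha. apply (derivable_pt_lim_comp a F); auto. Qed.
Lemma Dpow a n x la : derivable_pt_lim a x la ->
  derivable_pt_lim (fun s => a s ^ n) x (INR n * a x ^ pred n * la).
Proof. intros Ha. apply (Dcomp (fun y => y ^ n) (fun y => INR n * y ^ pred n)); auto.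
  intros; apply derivable_pt_lim_pow. Qed.
Lemma HDexp : forall y, derivable_pt_lim exp y (exp y).
Proof. intros; apply derivable_pt_lim_exp. Qed.
Lemma HDsin : forall y, derivable_pt_lim sin y (cos y).
Proof. intros; apply derivable_pt_lim_sin. Qed.
Lemma HDcos : forall y, derivable_pt_lim cos y (- sin y).
Proof. intros; apply derivable_pt_lim_cos. Qed.

Ltac deriv f :=
  lazymatch f with
  | (fun _ => ?c) => constr:(fun _ : R => 0)
  | (fun s => s) => constr:(fun _ : R => 1)
  | (fun s => @?a s + @?b s) => let da := deriv a in let db := deriv b in
      constr:(fun s : R => da s + db s)
  | (fun s => @?a s - @?b s) => let da := deriv a in let db := deriv b in
      constr:(fun s : R => da s - db s)
  | (fun s => - @?a s) => let da := deriv a in constr:(fun s : R => - da s)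
  | (fun s => @?a s * @?b s) => let da := deriv a in let db := deriv b in
      constr:(fun s : R => da s * b s + a s * db s)
  | (fun s => @?a s ^ ?n) => let da := deriv a in
      constr:(fun s : R => INR n * a s ^ pred n * da s)
  | (fun s => exp (@?a s)) => let da := deriv a in constr:(fun s : R => exp (a s) * da s)
  | (fun s => sin (@?a s)) => let da := deriv a in constr:(fun s : R => cos (a s) * da s)
  | (fun s => cos (@?a s)) => let da := deriv a in constr:(fun s : R => - sin (a s) * da s)
  | (fun s => ?F (@?a s)) =>
      let da := deriv a in
      lazymatch goal with
      | H : forall y, derivable_pt_lim F y (@?DF y) |- _ =>
          constr:(fun s : R => DF (a s) * da s)
      end
  end.

Ltac dprove :=
  lazymatch goal with
  | |- derivable_pt_lim (fun _ => ?c) _ _ => apply Dc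
  | |- derivable_pt_lim (fun s => s) _ _ => apply Did
  | |- derivable_pt_lim (fun s => @?a s + @?b s) _ _ => apply (Dplus a b); dprove
  | |- derivable_pt_lim (fun s => @?a s - @?b s) _ _ => apply (Dminus a b); dprove
  | |- derivable_pt_lim (fun s => - @?a s) _ _ => apply (Dopp a); dprove
  | |- derivable_pt_lim (fun s => @?a s * @?b s) _ _ => apply (Dmult a b); dprove
  | |- derivable_pt_lim (fun s => @?a s ^ ?n) _ _ => apply (Dpow a n); dprove
  | |- derivable_pt_lim (fun s => exp (@?a s)) _ _ => apply (Dcomp exp exp a); [exact HDexp| dprove]
  | |- derivable_pt_lim (fun s => sin (@?a s)) _ _ => apply (Dcomp sin cos a); [exact HDsin| dprove]
  | |- derivable_pt_lim (fun s => cos (@?a s)) _ _ =>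
      apply (Dcomp cos (fun y => - sin y) a); [exact HDcos| dprove]
  | |- derivable_pt_lim (fun s => ?F (@?a s)) _ _ =>
      lazymatch goal with
      | H : forall y, derivable_pt_lim F y (@?DF y) |- _ =>
          apply (Dcomp F DF a); [exact H | dprove]
      end
  end.

Lemma pd_fun d f (G : F4) :
  (forall t x y z, derivable_pt_lim (line d f t x y z) (coord d t x y z) (G t x y z)) ->
  pd d f = G.
Proof.
  intros H. apply functional_extensionality; intro t.
  apply functional_extensionality; intro x.
  apply functional_extensionality; intro y.
  apply functional_extensionality; intro z.
  unfold pd. apply (uniqueness_limite (line d f t x y z) (coord d t x y z)).
  - apply (epsilon_spec (inhabits 0) (fun l => derivable_pt_lim (line d f t x y z) (coord d t x y z) l)).
    exists (G t x y z). apply H.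
  - apply H.
Qed.

Ltac mkG d f :=
  constr:(fun tt_ xx_ yy_ zz_ : R => ltac:(
    let L := eval cbv beta delta [line] iota in (line d f tt_ xx_ yy_ zz_) in
    let L := eval cbv beta in L in
    let dL := deriv L in
    let c := eval cbv beta delta [coord] iota in (coord d tt_ xx_ yy_ zz_) in
    exact (dL c))).

Ltac pd_step :=
  match goal with |- context [pd ?d ?f] =>
    lazymatch f with context [pd] => fail | _ => idtac end;
    let f' := eval cbv beta in f in
    let G := mkG d f' in
    let G := eval cbv beta in G in
    let E := fresh "E" in
    assert (E : pd d f = G) by (apply pd_fun; intros; cbv beta delta [line coord] iota; dprove);
    rewrite E; clear E
  end.

Lemma cont4_const c : cont4 (fun _ _ _ _ => c).
Proof. intros t x y z e He. exists 1; split; [lra|]. intros. unfold Rminus; rewrite Rplus_opp_r, Rabs_R0; auto. Qed.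
Lemma cont4_t : cont4 (fun t _ _ _ => t).
Proof. intros t x y z e He. exists e; split; auto. Qed.
Lemma cont4_x : cont4 (fun _ x _ _ => x).
Proof. intros t x y z e He. exists e; split; auto. Qed.
Lemma cont4_y : cont4 (fun _ _ y _ => y).
Proof. intros t x y z e He. exists e; split; auto. Qed.
Lemma cont4_z : cont4 (fun _ _ _ z => z).
Proof. intros t x y z e He. exists e; split; auto. Qed.
Lemma cont4_plus f g : cont4 f -> cont4 g -> cont4 (fun t x y z => f t x y z + g t x y z).
Proof.
  intros Hf Hg t x y z e He.
  destruct (Hf t x y z (e/2)) as [d1 [Hd1 H1]]; [lra|].
  destruct (Hg t x y z (e/2)) as [d2 [Hd2 H2]]; [lra|].
  exists (Rmin d1 d2); split; [apply Rmin_pos; auto|].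
  intros t' x' y' z' A B C D.
  assert (P1 := H1 t' x' y' z' ltac:(eapply Rlt_le_trans; [exact A|apply Rmin_l])
     ltac:(eapply Rlt_le_trans; [exact B|apply Rmin_l])
     ltac:(eapply Rlt_le_trans; [exact C|apply Rmin_l])
     ltac:(eapply Rlt_le_trans; [exact D|apply Rmin_l])).
  assert (P2 := H2 t' x' y' z' ltac:(eapply Rlt_le_trans; [exact A|apply Rmin_r])
     ltac:(eapply Rlt_le_trans; [exact B|apply Rmin_r])
     ltac:(eapply Rlt_le_trans; [exact C|apply Rmin_r])
     ltac:(eapply Rlt_le_trans; [exact D|apply Rmin_r])).
  replace (f t' x' y' z' + g t' x' y' z' - (f t x y z + g t x y z)) with
    ((f t' x' y' z' - f t x y z) + (g t' x' y' z' - g t x y z)) by ring.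
  eapply Rle_lt_trans; [apply Rabs_triang|]. lra.
Qed.
Lemma cont4_comp (h : R -> R) f : (forall y, continuity_pt h y) -> cont4 f ->
  cont4 (fun t x y z => h (f t x y z)).
Proof.
  intros Hh Hf t x y z e He.
  destruct (Hh (f t x y z) e He) as [a [Ha H1]].
  destruct (Hf t x y z a Ha) as [d [Hd H2]].
  exists d; split; auto. intros t' x' y' z' A B C D.
  specialize (H2 t' x' y' z' A B C D).
  destruct (Req_dec (f t x y z) (f t' x' y' z')) as [E|E].
  - rewrite E; unfold Rminus; rewrite Rplus_opp_r, Rabs_R0; auto.
  - apply (H1 (f t' x' y' z')). split; [split; [exact I|auto]|]. exact H2.
Qed.
Lemma cont4_ext f g : (forall t x y z, f t x y z = g t x y z) -> cont4 f -> cont4 g.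
Proof. intros E Hf t x y z e He. destruct (Hf t x y z e He) as [d [Hd H]].
  exists d; split; auto. intros; rewrite <- !E; auto. Qed.
Lemma cont_lin c : forall y, continuity_pt (fun u => c * u) y.
Proof. intros; apply derivable_continuous_pt; eexists. apply (Dmult (fun _ => c) (fun u => u)); [apply Dc|apply Did]. Qed.
Lemma cont_sq : forall y, continuity_pt (fun u => u * u) y.
Proof. intros; apply derivable_continuous_pt; eexists. apply (Dmult (fun u => u) (fun u => u)); apply Did. Qed.
Lemma cont4_scal c f : cont4 f -> cont4 (fun t x y z => c * f t x y z).
Proof. intros; apply (cont4_comp (fun u => c * u)); auto using cont_lin. Qed.
Lemma cont4_mult f g : cont4 f -> cont4 g -> cont4 (fun t x y z => f t x y z * g t x y z).
Proof.
  intros Hf Hg.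
  apply (cont4_ext (fun t x y z => /4 * ((f t x y z + g t x y z) * (f t x y z + g t x y z))
     + (-/4) * ((f t x y z + (-1) * g t x y z) * (f t x y z + (-1) * g t x y z)))).
  - intros; field.
  - apply cont4_plus; apply cont4_scal;
    apply (cont4_comp (fun u => u * u) (fun t x y z => _ + _)); auto using cont_sq;
    apply cont4_plus; auto; apply cont4_scal; auto.
Qed.

Fixpoint Sm (n : nat) (f : F4) : Prop :=
  match n with
  | O => cont4 f
  | S m => cont4 f /\ forall d, exists g, is_partial d f g /\ Sm m g
  end.

Lemma Sm_cont n f : Sm n f -> cont4 f.
Proof. destruct n; simpl; tauto. Qed.
Lemma Sm_mono n f : Sm (S n) f -> Sm n f.
Proof.
  revert f; induction n; intros f [H1 H2]; simpl; auto.
  split; auto. intro d. destruct (H2 d) as [g [P Q]]. exists g; split; auto.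
Qed.
Lemma Sm_iter ds : forall f, Sm (length ds) f -> exists g, iter_partial ds f g /\ cont4 g.
Proof.
  induction ds as [|d ds IH]; intros f H.
  - exists f; split; [constructor|exact H].
  - destruct H as [_ H]. destruct (H d) as [g [P Q]].
    destruct (IH g Q) as [h [P2 Q2]]. exists h; split; auto. econstructor; eauto.
Qed.
Lemma Sm_smooth f : (forall n, Sm n f) -> smooth f.
Proof. intros H ds. apply Sm_iter, H. Qed.

Lemma Sm_const c : forall n, Sm n (fun _ _ _ _ => c).
Proof.
  intro n; revert c; induction n; intro c; simpl; [apply cont4_const|]. split; [apply cont4_const|].
  intro d; exists (fun _ _ _ _ => 0); split; [|exact (IHn 0)].
  intros t x y z; destruct d; simpl; apply Dc.
Qed.
Lemma Sm_t n : Sm n (fun t _ _ _ => t).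
Proof.
  induction n as [|n IH]; simpl;
  [ first [apply cont4_t|apply cont4_x|apply cont4_y|apply cont4_z]
  | split; [first [apply cont4_t|apply cont4_x|apply cont4_y|apply cont4_z]|];
    intros [];
    first [ exists (fun _ _ _ _ => 1); split; [intros t x y z; simpl; apply Did|apply Sm_const]
          | exists (fun _ _ _ _ => 0); split; [intros t x y z; simpl; apply Dc|apply Sm_const]]].
Qed.
Lemma Sm_x n : Sm n (fun _ x _ _ => x).
Proof.
  induction n as [|n IH]; simpl;
  [ first [apply cont4_t|apply cont4_x|apply cont4_y|apply cont4_z]
  | split; [first [apply cont4_t|apply cont4_x|apply cont4_y|apply cont4_z]|];
    intros [];
    first [ exists (fun _ _ _ _ => 1); split; [intros t x y z; simpl; apply Did|apply Sm_const]
          | exists (fun _ _ _ _ => 0); split; [intros t x y z; simpl; apply Dc|apply Sm_const]]].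
Qed.
Lemma Sm_y n : Sm n (fun _ _ y _ => y).
Proof.
  induction n as [|n IH]; simpl;
  [ first [apply cont4_t|apply cont4_x|apply cont4_y|apply cont4_z]
  | split; [first [apply cont4_t|apply cont4_x|apply cont4_y|apply cont4_z]|];
    intros [];
    first [ exists (fun _ _ _ _ => 1); split; [intros t x y z; simpl; apply Did|apply Sm_const]
          | exists (fun _ _ _ _ => 0); split; [intros t x y z; simpl; apply Dc|apply Sm_const]]].
Qed.
Lemma Sm_z n : Sm n (fun _ _ _ z => z).
Proof.
  induction n as [|n IH]; simpl;
  [ first [apply cont4_t|apply cont4_x|apply cont4_y|apply cont4_z]
  | split; [first [apply cont4_t|apply cont4_x|apply cont4_y|apply cont4_z]|];
    intros [];
    first [ exists (fun _ _ _ _ => 1); split; [intros t x y z; simpl; apply Did|apply Sm_const]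
          | exists (fun _ _ _ _ => 0); split; [intros t x y z; simpl; apply Dc|apply Sm_const]]].
Qed.
Lemma Sm_plus n : forall f g, Sm n f -> Sm n g -> Sm n (fun t x y z => f t x y z + g t x y z).
Proof.
  induction n; intros f g Hf Hg; simpl in *.
  - apply cont4_plus; auto.
  - destruct Hf as [cf Hf], Hg as [cg Hg]. split; [apply cont4_plus; auto|].
    intro d; destruct (Hf d) as [f' [Pf Sf]], (Hg d) as [g' [Pg Sg]].
    exists (fun t x y z => f' t x y z + g' t x y z); split; auto.
    intros t x y z; specialize (Pf t x y z); specialize (Pg t x y z);
    destruct d; simpl in *; apply (Dplus _ _ _ _ _ Pf Pg).
Qed.
Lemma Sm_mult n : forall f g, Sm n f -> Sm n g -> Sm n (fun t x y z => f t x y z * g t x y z).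
Proof.
  induction n; intros f g Hf Hg.
  - simpl in *; apply cont4_mult; auto.
  - assert (Hf0 := Sm_mono _ _ Hf); assert (Hg0 := Sm_mono _ _ Hg).
    simpl in Hf, Hg. destruct Hf as [cf Hf], Hg as [cg Hg]. split; [apply cont4_mult; auto|].
    intro d; destruct (Hf d) as [f' [Pf Sf]], (Hg d) as [g' [Pg Sg]].
    exists (fun t x y z => f' t x y z * g t x y z + f t x y z * g' t x y z); split.
    + intros t x y z; specialize (Pf t x y z); specialize (Pg t x y z);
      destruct d; simpl in *; apply (Dmult _ _ _ _ _ Pf Pg).
    + apply Sm_plus; apply IHn; auto.
Qed.
Lemma Sm_opp n f : Sm n f -> Sm n (fun t x y z => - f t x y z).
Proof.
  intro H. assert (H2 := Sm_mult n _ _ (Sm_const (-1) n) H). simpl in H2.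
  revert H2. replace (fun t x y z => - f t x y z) with (fun t x y z => -1 * f t x y z); auto.
  repeat (apply functional_extensionality; intro). ring.
Qed.
Lemma Sm_minus n f g : Sm n f -> Sm n g -> Sm n (fun t x y z => f t x y z - g t x y z).
Proof. intros; apply (Sm_plus n f (fun t x y z => - g t x y z)); auto; apply Sm_opp; auto. Qed.
Lemma Sm_pow n f m : Sm n f -> Sm n (fun t x y z => f t x y z ^ m).
Proof. intro H; induction m; simpl; [apply Sm_const|apply Sm_mult; auto]. Qed.

Lemma Sm_comp (K : (R -> R) -> (R -> R) -> Prop) :
  (forall h h', K h h' -> forall y, derivable_pt_lim h y (h' y)) ->
  (forall n g, Sm n g -> (forall h h', K h h' -> Sm n (fun t x y z => h (g t x y z))) ->
     forall h h', K h h' -> Sm n (fun t x y z => h' (g t x y z))) ->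
  forall n h h' g, K h h' -> Sm n g -> Sm n (fun t x y z => h (g t x y z)).
Proof.
  intros HD HC. induction n; intros h h' g HK Hg.
  - simpl in *. apply cont4_comp; auto. intro y.
    apply derivable_continuous_pt. exists (h' y). apply (HD _ _ HK).
  - assert (Hg0 := Sm_mono _ _ Hg). simpl in Hg. destruct Hg as [cg Hg].
    split.
    + apply cont4_comp; auto. intro y.
      apply derivable_continuous_pt. exists (h' y). apply (HD _ _ HK).
    + intro d; destruct (Hg d) as [g' [Pg Sg]].
      exists (fun t x y z => h' (g t x y z) * g' t x y z); split.
      * intros t x y z; specialize (Pg t x y z).
        destruct d; simpl in *; apply (Dcomp h h' _ _ _ (HD _ _ HK) Pg).
      * apply Sm_mult; auto.
        exact (HC n g Hg0 (fun h0 h0' HK0 => IHn h0 h0' g HK0 Hg0) h h' HK).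
Qed.

Lemma Sm_exp n g : Sm n g -> Sm n (fun t x y z => exp (g t x y z)).
Proof.
  intro H. refine (Sm_comp (fun h h' => h = exp /\ h' = exp) _ _ n exp exp g _ H).
  - intros h h' [E1 E2]; subst; apply HDexp.
  - intros m g0 _ IH h h' [E1 E2]; subst. apply (IH exp exp); auto.
  - auto.
Qed.
Lemma Sm_sincos n g : Sm n g -> Sm n (fun t x y z => sin (g t x y z)) /\ Sm n (fun t x y z => cos (g t x y z)).
Proof.
  intro H. set (K := fun h h' : R -> R => (h = sin /\ h' = cos) \/ (h = cos /\ h' = (fun y => - sin y))).
  assert (HD : forall h h', K h h' -> forall y, derivable_pt_lim h y (h' y)).
  { intros h h' [[E1 E2]|[E1 E2]]; subst; [apply HDsin|apply HDcos]. }
  assert (HC : forall n g, Sm n g -> (forall h h', K h h' -> Sm n (fun t x y z => h (g t x y z))) ->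
     forall h h', K h h' -> Sm n (fun t x y z => h' (g t x y z))).
  { intros m g0 _ IH h h' [[E1 E2]|[E1 E2]]; subst.
    - apply (IH cos (fun y => - sin y)); right; auto.
    - apply Sm_opp. apply (IH sin cos); left; auto. }
  split.
  - apply (Sm_comp K HD HC n sin cos); auto. left; auto.
  - apply (Sm_comp K HD HC n cos (fun y => - sin y)); auto. right; auto.
Qed.
Lemma Sm_sin n g : Sm n g -> Sm n (fun t x y z => sin (g t x y z)).
Proof. intro; apply Sm_sincos; auto. Qed.
Lemma Sm_cos n g : Sm n g -> Sm n (fun t x y z => cos (g t x y z)).
Proof. intro; apply Sm_sincos; auto. Qed.

Ltac smt :=
  lazymatch goal with
  | |- Sm ?n (fun _ _ _ _ => ?c) => apply Sm_const
  | |- Sm ?n (fun t _ _ _ => t) => apply Sm_t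
  | |- Sm ?n (fun _ x _ _ => x) => apply Sm_x
  | |- Sm ?n (fun _ _ y _ => y) => apply Sm_y
  | |- Sm ?n (fun _ _ _ z => z) => apply Sm_z
  | |- Sm ?n (fun t x y z => @?a t x y z + @?b t x y z) => apply (Sm_plus n a b); smt
  | |- Sm ?n (fun t x y z => @?a t x y z - @?b t x y z) => apply (Sm_minus n a b); smt
  | |- Sm ?n (fun t x y z => - @?a t x y z) => apply (Sm_opp n a); smt
  | |- Sm ?n (fun t x y z => @?a t x y z * @?b t x y z) => apply (Sm_mult n a b); smt
  | |- Sm ?n (fun t x y z => @?a t x y z ^ ?m) => apply (Sm_pow n a m); smt
  | |- Sm ?n (fun t x y z => exp (@?a t x y z)) => apply (Sm_exp n a); smt
  | |- Sm ?n (fun t x y z => sin (@?a t x y z)) => apply (Sm_sin n a); smt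
  | |- Sm ?n (fun t x y z => cos (@?a t x y z)) => apply (Sm_cos n a); smt
  | |- Sm ?n (fun t x y z => ?F (@?a t x y z)) =>
      lazymatch goal with
      | H : forall n g, Sm n g -> Sm n (fun t x y z => F (g t x y z)) |- _ => apply (H n a); smt
      end
  end.

Definition SA1 k l (P0 P1 P2 Q0 Q1 : R -> R) t x y :=
  (P0 (Yc k l t x y) + Xc k l t x y * P1 (Yc k l t x y) + Xc k l t x y * Xc k l t x y * P2 (Yc k l t x y)) * cos (alph k l t)
  - (Q0 (Yc k l t x y) + 2 * Xc k l t x y * Q1 (Yc k l t x y)) * sin (alph k l t).
Definition SA2 k l (P0 P1 P2 Q0 Q1 : R -> R) t x y :=
  (P0 (Yc k l t x y) + Xc k l t x y * P1 (Yc k l t x y) + Xc k l t x y * Xc k l t x y * P2 (Yc k l t x y)) * sin (alph k l t)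
  + (Q0 (Yc k l t x y) + 2 * Xc k l t x y * Q1 (Yc k l t x y)) * cos (alph k l t).
Definition vA nu s k l a1 C1 P0 P1 P2 Q0 Q1 : vec := mkvec
  (fun t x y z => k * (- y) + C1 * exp (s * nu * a1 ^ 2 * t) * SA1 k l P0 P1 P2 Q0 Q1 t x y)
  (fun t x y z => k * x + C1 * exp (s * nu * a1 ^ 2 * t) * SA2 k l P0 P1 P2 Q0 Q1 t x y)
  (fun t x y z => 0).
Definition HA eta s k l a1 C2 P0 P1 P2 Q0 Q1 : vec := mkvec
  (fun t x y z => C2 * exp (s * eta * a1 ^ 2 * t) * SA1 k l P0 P1 P2 Q0 Q1 t x y)
  (fun t x y z => C2 * exp (s * eta * a1 ^ 2 * t) * SA2 k l P0 P1 P2 Q0 Q1 t x y)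
  (fun t x y z => 0).
Definition pA nu eta mu0 rho s k l a1 C1 C2 (Rz P0 P1 P2 Q0 Q1 : R -> R) : F4 :=
  fun t x y z => rho * (/ 2 * (k ^ 2 * (x * x + y * y)
   - 4 * k * (C1 * exp (s * nu * a1 ^ 2 * t)) *
       (Rz (Yc k l t x y) - Xc k l t x y * Q0 (Yc k l t x y) - Xc k l t x y * Xc k l t x y * Q1 (Yc k l t x y))
   - (C1 * exp (s * nu * a1 ^ 2 * t)) * (C1 * exp (s * nu * a1 ^ 2 * t)) *
      ((P0 (Yc k l t x y) + Xc k l t x y * P1 (Yc k l t x y) + Xc k l t x y * Xc k l t x y * P2 (Yc k l t x y)) *
       (P0 (Yc k l t x y) + Xc k l t x y * P1 (Yc k l t x y) + Xc k l t x y * Xc k l t x y * P2 (Yc k l t x y))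
      + (Q0 (Yc k l t x y) + 2 * Xc k l t x y * Q1 (Yc k l t x y)) * (Q0 (Yc k l t x y) + 2 * Xc k l t x y * Q1 (Yc k l t x y)))
   + ((C1 * exp (s * nu * a1 ^ 2 * t)) * (C1 * exp (s * nu * a1 ^ 2 * t)) + mu0 * ((C2 * exp (s * eta * a1 ^ 2 * t)) * (C2 * exp (s * eta * a1 ^ 2 * t)))) * s * a1 ^ 2 *
      ((Rz (Yc k l t x y) - Xc k l t x y * Q0 (Yc k l t x y) - Xc k l t x y * Xc k l t x y * Q1 (Yc k l t x y)) *
       (Rz (Yc k l t x y) - Xc k l t x y * Q0 (Yc k l t x y) - Xc k l t x y * Xc k l t x y * Q1 (Yc k l t x y))))).

Ltac prep := unfold MHD, divg, momentum_comp, induction_comp, lap, advect, rot, cross,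
   vA, HA, pA, SA1, SA2, Xc, Yc, alph; cbn [cx cy cz].

Lemma cs1 a : cos a ^ 2 + sin a ^ 2 = 1.
Proof. rewrite <- (sin2_cos2 a). unfold Rsqr; ring. Qed.

Ltac fin :=
  repeat match goal with |- context [?F (- ?x * sin ?a + ?y * cos ?a)] =>
     is_var F; generalize (F (- x * sin a + y * cos a)); intro end;
  repeat match goal with |- context [exp ?e] => generalize (exp e); intro end;
  match goal with |- context [cos ?a] => generalize (cs1 a); generalize (cos a), (sin a); intros end;
  repeat match goal with H : forall y : R, derivable_pt_lim _ _ _ |- _ => clear H end;
  intros.

Lemma powS2 (Sn C : R) n : Sn^2 = 1 - C^2 -> Sn ^ (S (S n)) = Sn ^ n * (1 - C^2).
Proof. intro h; rewrite <- h; simpl; ring. Qed.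

Ltac fin2 :=
  match goal with H : ?C ^ 2 + ?S ^ 2 = 1 |- _ =>
   ring_simplify;
   let h := fresh in assert (h : S^2 = 1 - C^2) by lra;
   repeat match goal with |- context [S ^ (Datatypes.S (Datatypes.S ?m))] =>
     rewrite (powS2 S C m h) end end;
  field; repeat split; auto.



Definition ODEs s a1 (Rz P0 P1 P2 Q0 Q1 : R -> R) : Prop :=
  (forall y, derivable_pt_lim Rz y (P0 y)) /\
  (forall y, derivable_pt_lim P0 y (s * a1 ^ 2 * Rz y + 2 * Q1 y)) /\
  (forall y, derivable_pt_lim P1 y (- (s * a1 ^ 2 * Q0 y))) /\
  (forall y, derivable_pt_lim P2 y (- (s * a1 ^ 2 * Q1 y))) /\
  (forall y, derivable_pt_lim Q0 y (- P1 y)) /\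
  (forall y, derivable_pt_lim Q1 y (- P2 y)).

Lemma e1 (nu eta mu0 rho s k l a1 C1 C2 : R) (Rz P0 P1 P2 Q0 Q1 : R -> R) (Hrho : rho <> 0)
  (HR0 : forall y, derivable_pt_lim Rz y (P0 y))
  (HP0 : forall y, derivable_pt_lim P0 y (s * a1 ^ 2 * Rz y + 2 * Q1 y))
  (HP1 : forall y, derivable_pt_lim P1 y (- (s * a1 ^ 2 * Q0 y)))
  (HP2 : forall y, derivable_pt_lim P2 y (- (s * a1 ^ 2 * Q1 y)))
  (HQ0 : forall y, derivable_pt_lim Q0 y (- P1 y))
  (HQ1 : forall y, derivable_pt_lim Q1 y (- P2 y)) t x y z :
  divg (vA nu s k l a1 C1 P0 P1 P2 Q0 Q1) t x y z = 0.
Proof. prep. repeat pd_step. cbv beta; simpl INR. fin. fin2. Qed.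

Lemma e2 (nu eta mu0 rho s k l a1 C1 C2 : R) (Rz P0 P1 P2 Q0 Q1 : R -> R) (Hrho : rho <> 0)
  (HR0 : forall y, derivable_pt_lim Rz y (P0 y))
  (HP0 : forall y, derivable_pt_lim P0 y (s * a1 ^ 2 * Rz y + 2 * Q1 y))
  (HP1 : forall y, derivable_pt_lim P1 y (- (s * a1 ^ 2 * Q0 y)))
  (HP2 : forall y, derivable_pt_lim P2 y (- (s * a1 ^ 2 * Q1 y)))
  (HQ0 : forall y, derivable_pt_lim Q0 y (- P1 y))
  (HQ1 : forall y, derivable_pt_lim Q1 y (- P2 y)) t x y z :
  momentum_comp nu mu0 rho cx Dx (vA nu s k l a1 C1 P0 P1 P2 Q0 Q1) (HA eta s k l a1 C2 P0 P1 P2 Q0 Q1) (pA nu eta mu0 rho s k l a1 C1 C2 Rz P0 P1 P2 Q0 Q1) t x y z.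
Proof. prep. repeat pd_step. cbv beta; simpl INR. fin. fin2. Qed.

Lemma e3 (nu eta mu0 rho s k l a1 C1 C2 : R) (Rz P0 P1 P2 Q0 Q1 : R -> R) (Hrho : rho <> 0)
  (HR0 : forall y, derivable_pt_lim Rz y (P0 y))
  (HP0 : forall y, derivable_pt_lim P0 y (s * a1 ^ 2 * Rz y + 2 * Q1 y))
  (HP1 : forall y, derivable_pt_lim P1 y (- (s * a1 ^ 2 * Q0 y)))
  (HP2 : forall y, derivable_pt_lim P2 y (- (s * a1 ^ 2 * Q1 y)))
  (HQ0 : forall y, derivable_pt_lim Q0 y (- P1 y))
  (HQ1 : forall y, derivable_pt_lim Q1 y (- P2 y)) t x y z :
  momentum_comp nu mu0 rho cy Dy (vA nu s k l a1 C1 P0 P1 P2 Q0 Q1) (HA eta s k l a1 C2 P0 P1 P2 Q0 Q1) (pA nu eta mu0 rho s k l a1 C1 C2 Rz P0 P1 P2 Q0 Q1) t x y z.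
Proof. prep. repeat pd_step. cbv beta; simpl INR. fin. fin2. Qed.

Lemma e4 (nu eta mu0 rho s k l a1 C1 C2 : R) (Rz P0 P1 P2 Q0 Q1 : R -> R) (Hrho : rho <> 0)
  (HR0 : forall y, derivable_pt_lim Rz y (P0 y))
  (HP0 : forall y, derivable_pt_lim P0 y (s * a1 ^ 2 * Rz y + 2 * Q1 y))
  (HP1 : forall y, derivable_pt_lim P1 y (- (s * a1 ^ 2 * Q0 y)))
  (HP2 : forall y, derivable_pt_lim P2 y (- (s * a1 ^ 2 * Q1 y)))
  (HQ0 : forall y, derivable_pt_lim Q0 y (- P1 y))
  (HQ1 : forall y, derivable_pt_lim Q1 y (- P2 y)) t x y z :
  momentum_comp nu mu0 rho cz Dz (vA nu s k l a1 C1 P0 P1 P2 Q0 Q1) (HA eta s k l a1 C2 P0 P1 P2 Q0 Q1) (pA nu eta mu0 rho s k l a1 C1 C2 Rz P0 P1 P2 Q0 Q1) t x y z.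
Proof. prep. repeat pd_step. cbv beta; simpl INR. fin. fin2. Qed.

Lemma e5 (nu eta mu0 rho s k l a1 C1 C2 : R) (Rz P0 P1 P2 Q0 Q1 : R -> R) (Hrho : rho <> 0)
  (HR0 : forall y, derivable_pt_lim Rz y (P0 y))
  (HP0 : forall y, derivable_pt_lim P0 y (s * a1 ^ 2 * Rz y + 2 * Q1 y))
  (HP1 : forall y, derivable_pt_lim P1 y (- (s * a1 ^ 2 * Q0 y)))
  (HP2 : forall y, derivable_pt_lim P2 y (- (s * a1 ^ 2 * Q1 y)))
  (HQ0 : forall y, derivable_pt_lim Q0 y (- P1 y))
  (HQ1 : forall y, derivable_pt_lim Q1 y (- P2 y)) t x y z :
  divg (HA eta s k l a1 C2 P0 P1 P2 Q0 Q1) t x y z = 0.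
Proof. prep. repeat pd_step. cbv beta; simpl INR. fin. fin2. Qed.

Lemma e6 (nu eta mu0 rho s k l a1 C1 C2 : R) (Rz P0 P1 P2 Q0 Q1 : R -> R) (Hrho : rho <> 0)
  (HR0 : forall y, derivable_pt_lim Rz y (P0 y))
  (HP0 : forall y, derivable_pt_lim P0 y (s * a1 ^ 2 * Rz y + 2 * Q1 y))
  (HP1 : forall y, derivable_pt_lim P1 y (- (s * a1 ^ 2 * Q0 y)))
  (HP2 : forall y, derivable_pt_lim P2 y (- (s * a1 ^ 2 * Q1 y)))
  (HQ0 : forall y, derivable_pt_lim Q0 y (- P1 y))
  (HQ1 : forall y, derivable_pt_lim Q1 y (- P2 y)) t x y z :
  induction_comp eta cx (vA nu s k l a1 C1 P0 P1 P2 Q0 Q1) (HA eta s k l a1 C2 P0 P1 P2 Q0 Q1) t x y z.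
Proof. prep. repeat pd_step. cbv beta; simpl INR. fin. fin2. Qed.

Lemma e7 (nu eta mu0 rho s k l a1 C1 C2 : R) (Rz P0 P1 P2 Q0 Q1 : R -> R) (Hrho : rho <> 0)
  (HR0 : forall y, derivable_pt_lim Rz y (P0 y))
  (HP0 : forall y, derivable_pt_lim P0 y (s * a1 ^ 2 * Rz y + 2 * Q1 y))
  (HP1 : forall y, derivable_pt_lim P1 y (- (s * a1 ^ 2 * Q0 y)))
  (HP2 : forall y, derivable_pt_lim P2 y (- (s * a1 ^ 2 * Q1 y)))
  (HQ0 : forall y, derivable_pt_lim Q0 y (- P1 y))
  (HQ1 : forall y, derivable_pt_lim Q1 y (- P2 y)) t x y z :
  induction_comp eta cy (vA nu s k l a1 C1 P0 P1 P2 Q0 Q1) (HA eta s k l a1 C2 P0 P1 P2 Q0 Q1) t x y z.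
Proof. prep. repeat pd_step. cbv beta; simpl INR. fin. fin2. Qed.

Lemma e8 (nu eta mu0 rho s k l a1 C1 C2 : R) (Rz P0 P1 P2 Q0 Q1 : R -> R) (Hrho : rho <> 0)
  (HR0 : forall y, derivable_pt_lim Rz y (P0 y))
  (HP0 : forall y, derivable_pt_lim P0 y (s * a1 ^ 2 * Rz y + 2 * Q1 y))
  (HP1 : forall y, derivable_pt_lim P1 y (- (s * a1 ^ 2 * Q0 y)))
  (HP2 : forall y, derivable_pt_lim P2 y (- (s * a1 ^ 2 * Q1 y)))
  (HQ0 : forall y, derivable_pt_lim Q0 y (- P1 y))
  (HQ1 : forall y, derivable_pt_lim Q1 y (- P2 y)) t x y z :
  induction_comp eta cz (vA nu s k l a1 C1 P0 P1 P2 Q0 Q1) (HA eta s k l a1 C2 P0 P1 P2 Q0 Q1) t x y z.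
Proof. prep. repeat pd_step. cbv beta; simpl INR. fin. fin2. Qed.

Lemma MHD_abs nu eta mu0 rho s k l a1 C1 C2 (Rz P0 P1 P2 Q0 Q1 : R -> R) :
  rho <> 0 -> ODEs s a1 Rz P0 P1 P2 Q0 Q1 ->
  MHD nu eta mu0 rho (vA nu s k l a1 C1 P0 P1 P2 Q0 Q1) (HA eta s k l a1 C2 P0 P1 P2 Q0 Q1) (pA nu eta mu0 rho s k l a1 C1 C2 Rz P0 P1 P2 Q0 Q1).
Proof.
  intros Hrho (HR0 & HP0 & HP1 & HP2 & HQ0 & HQ1) t x y z.
  repeat split; [eapply e1|eapply e2|eapply e3|eapply e4|eapply e5|eapply e6|eapply e7|eapply e8]; eauto.
  all: exact Hrho.
Qed.

Lemma Sm_fam s a1 (Rz P0 P1 P2 Q0 Q1 : R -> R) : ODEs s a1 Rz P0 P1 P2 Q0 Q1 ->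
  forall F, (F = Rz \/ F = P0 \/ F = P1 \/ F = P2 \/ F = Q0 \/ F = Q1) ->
  forall n g, Sm n g -> Sm n (fun t x y z => F (g t x y z)).
Proof.
  intros (HR0 & HP0 & HP1 & HP2 & HQ0 & HQ1).
  set (K := fun h h' : R -> R =>
    (h = Rz /\ h' = P0) \/ (h = P0 /\ h' = (fun y => s * a1 ^ 2 * Rz y + 2 * Q1 y)) \/
    (h = P1 /\ h' = (fun y => - (s * a1 ^ 2 * Q0 y))) \/ (h = P2 /\ h' = (fun y => - (s * a1 ^ 2 * Q1 y))) \/
    (h = Q0 /\ h' = (fun y => - P1 y)) \/ (h = Q1 /\ h' = (fun y => - P2 y))).
  assert (HD : forall h h', K h h' -> forall y, derivable_pt_lim h y (h' y)).
  { intros h h' HK; repeat destruct HK as [[E1 E2]|HK]; try destruct HK as [E1 E2]; subst; auto. }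
  assert (HC : forall n g, Sm n g -> (forall h h', K h h' -> Sm n (fun t x y z => h (g t x y z))) ->
     forall h h', K h h' -> Sm n (fun t x y z => h' (g t x y z))).
  { intros m g0 _ IH h h' HK.
    assert (SR : Sm m (fun t x y z => Rz (g0 t x y z))) by (apply (IH Rz P0); left; auto).
    assert (S0 : Sm m (fun t x y z => P0 (g0 t x y z))) by (apply (IH P0 (fun y => s * a1 ^ 2 * Rz y + 2 * Q1 y)); right; left; auto).
    assert (S1 : Sm m (fun t x y z => P1 (g0 t x y z))) by (apply (IH P1 (fun y => - (s * a1 ^ 2 * Q0 y))); do 2 right; left; auto).
    assert (S2 : Sm m (fun t x y z => P2 (g0 t x y z))) by (apply (IH P2 (fun y => - (s * a1 ^ 2 * Q1 y))); do 3 right; left; auto).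
    assert (T0 : Sm m (fun t x y z => Q0 (g0 t x y z))) by (apply (IH Q0 (fun y => - P1 y)); do 4 right; left; auto).
    assert (T1 : Sm m (fun t x y z => Q1 (g0 t x y z))) by (apply (IH Q1 (fun y => - P2 y)); do 5 right; auto).
    repeat destruct HK as [[E1 E2]|HK]; try destruct HK as [E1 E2]; subst; auto.
    - apply Sm_plus; [apply Sm_mult; [apply Sm_const|auto]|apply Sm_mult; [apply Sm_const|auto]].
    - apply Sm_opp; apply Sm_mult; [apply Sm_const|auto].
    - apply Sm_opp; apply Sm_mult; [apply Sm_const|auto].
    - apply Sm_opp; auto.
    - apply Sm_opp; auto. }
  intros F HF n g Hg.
  repeat destruct HF as [E|HF]; subst.
  - exact (Sm_comp K HD HC n Rz P0 g ltac:(left; auto) Hg).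
  - exact (Sm_comp K HD HC n P0 (fun y => s * a1 ^ 2 * Rz y + 2 * Q1 y) g ltac:(right; left; auto) Hg).
  - exact (Sm_comp K HD HC n P1 (fun y => - (s * a1 ^ 2 * Q0 y)) g ltac:(do 2 right; left; auto) Hg).
  - exact (Sm_comp K HD HC n P2 (fun y => - (s * a1 ^ 2 * Q1 y)) g ltac:(do 3 right; left; auto) Hg).
  - exact (Sm_comp K HD HC n Q0 (fun y => - P1 y) g ltac:(do 4 right; left; auto) Hg).
  - exact (Sm_comp K HD HC n Q1 (fun y => - P2 y) g ltac:(do 5 right; auto) Hg).
Qed.

Lemma smooth_abs nu eta mu0 rho s k l a1 C1 C2 (Rz P0 P1 P2 Q0 Q1 : R -> R) :
  ODEs s a1 Rz P0 P1 P2 Q0 Q1 ->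
  smooth (pA nu eta mu0 rho s k l a1 C1 C2 Rz P0 P1 P2 Q0 Q1) /\
  smooth_vec (vA nu s k l a1 C1 P0 P1 P2 Q0 Q1) /\ smooth_vec (HA eta s k l a1 C2 P0 P1 P2 Q0 Q1).
Proof.
  intro HO.
  assert (HR := Sm_fam _ _ _ _ _ _ _ _ HO Rz ltac:(auto)).
  assert (H0 := Sm_fam _ _ _ _ _ _ _ _ HO P0 ltac:(auto)).
  assert (H1 := Sm_fam _ _ _ _ _ _ _ _ HO P1 ltac:(auto)).
  assert (H2 := Sm_fam _ _ _ _ _ _ _ _ HO P2 ltac:(auto)).
  assert (H3 := Sm_fam _ _ _ _ _ _ _ _ HO Q0 ltac:(auto 6)).
  assert (H4 := Sm_fam _ _ _ _ _ _ _ _ HO Q1 ltac:(right; right; right; right; right; reflexivity)).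
  unfold smooth_vec, vA, HA, pA, SA1, SA2, Xc, Yc, alph; cbn [cx cy cz].
  repeat split; apply Sm_smooth; intro n; smt.
Qed.

Lemma Dequiv f x l1 l2 : derivable_pt_lim f x l1 -> l1 = l2 -> derivable_pt_lim f x l2.
Proof. intros H ->; auto. Qed.

Ltac dgoal := lazymatch goal with |- derivable_pt_lim ?f ?x _ =>
  let f' := eval cbv beta in f in
  let L := deriv f' in apply (Dequiv f' x (L x)); [dprove|cbv beta; simpl INR] end.

Definition Rz0 a1 a2 a b1 c1 := fun Y : R => if Req_EM_T a1 0 then 0 else
  (b1 * exp (a1 * Y) + c1 * exp (- (a1 * Y))) +
  a2 * (Y * (exp (a1 * Y) + a * exp (- (a1 * Y))) - (exp (a1 * Y) - a * exp (- (a1 * Y))) * / a1).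
Definition P00 a1 a2 a b1 c1 := fun Y : R =>
  a1 * (b1 * exp (a1 * Y) - c1 * exp (- (a1 * Y))) + a1 * a2 * Y * (exp (a1 * Y) - a * exp (- (a1 * Y))).
Definition P10 a1 b c := fun Y : R => - (a1 * (b * exp (a1 * Y) + c * exp (- (a1 * Y)))).
Definition P20 a1 a2 a := fun Y : R => - (a1 * a1 * a2 * (exp (a1 * Y) + a * exp (- (a1 * Y)))).
Definition Q00 a1 b c := fun Y : R => b * exp (a1 * Y) - c * exp (- (a1 * Y)).
Definition Q10 a1 a2 a := fun Y : R => a1 * a2 * (exp (a1 * Y) - a * exp (- (a1 * Y))).

Lemma ODE0 a1 a2 a b c b1 c1 :
  ODEs ((-1) ^ 0) a1 (Rz0 a1 a2 a b1 c1) (P00 a1 a2 a b1 c1) (P10 a1 b c) (P20 a1 a2 a) (Q00 a1 b c) (Q10 a1 a2 a).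
Proof.
  unfold ODEs, Rz0, P00, P10, P20, Q00, Q10; simpl pow.
  destruct (Req_EM_T a1 0) as [E|E].
  - subst a1. repeat split; intro y; dgoal; ring.
  - repeat split; intro y; dgoal; field; auto.
Qed.

Definition Rz1 a1 a2 b1 c1 := fun Y : R => if Req_EM_T a1 0 then 0 else
  - (c1 * cos (a1 * Y + b1)) + a2 * (- (Y * cos (a1 * Y)) + sin (a1 * Y) * / a1).
Definition P01 a1 a2 b1 c1 := fun Y : R =>
  a1 * (c1 * sin (a1 * Y + b1)) + a1 * a2 * Y * sin (a1 * Y).
Definition P11 a1 b c := fun Y : R => - (a1 * (c * cos (a1 * Y + b))).
Definition P21 a1 a2 := fun Y : R => - (a1 * a1 * a2 * cos (a1 * Y)).
Definition Q01 a1 b c := fun Y : R => c * sin (a1 * Y + b).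
Definition Q11 a1 a2 := fun Y : R => a1 * a2 * sin (a1 * Y).

Lemma ODE1 a1 a2 b c b1 c1 :
  ODEs ((-1) ^ 1) a1 (Rz1 a1 a2 b1 c1) (P01 a1 a2 b1 c1) (P11 a1 b c) (P21 a1 a2) (Q01 a1 b c) (Q11 a1 a2).
Proof.
  unfold ODEs, Rz1, P01, P11, P21, Q01, Q11; simpl pow.
  destruct (Req_EM_T a1 0) as [E|E].
  - subst a1. repeat split; intro y; dgoal; ring.
  - repeat split; intro y; dgoal; field; auto.
Qed.

Lemma vec_ext (f1 f2 f3 g1 g2 g3 : F4) :
  (forall t x y z, f1 t x y z = g1 t x y z) -> (forall t x y z, f2 t x y z = g2 t x y z) ->
  (forall t x y z, f3 t x y z = g3 t x y z) -> mkvec f1 f2 f3 = mkvec g1 g2 g3.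
Proof.
  intros A B C.
  assert (f1 = g1) by (repeat (apply functional_extensionality; intro); apply A).
  assert (f2 = g2) by (repeat (apply functional_extensionality; intro); apply B).
  assert (f3 = g3) by (repeat (apply functional_extensionality; intro); apply C).
  subst; auto.
Qed.

Theorem mainTheorem7 :
  forall (nu eta mu0 rho : R), 0 < nu -> 0 < eta -> 0 < mu0 -> 0 < rho ->
  forall (r : nat), (r = 0%nat \/ r = 1%nat) ->
  forall (k l a1 a2 C1 C2 a b c b1 c1 : R),
  exists p : F4,
    smooth p /\
    smooth_vec (vsol nu r k l a1 a2 C1 a b c b1 c1) /\
    smooth_vec (Hsol eta r k l a1 a2 C2 a b c b1 c1) /\
    MHD nu eta mu0 rho (vsol nu r k l a1 a2 C1 a b c b1 c1)
                       (Hsol eta r k l a1 a2 C2 a b c b1 c1) p.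
Proof.
  intros nu eta mu0 rho Hnu Heta Hmu Hrho r Hr k l a1 a2 C1 C2 a b c b1 c1.
  assert (Hr0 : rho <> 0) by lra.
  destruct Hr as [-> | ->].
  - assert (HO := ODE0 a1 a2 a b c b1 c1).
    assert (EV : vsol nu 0 k l a1 a2 C1 a b c b1 c1 =
       vA nu ((-1) ^ 0) k l a1 C1 (P00 a1 a2 a b1 c1) (P10 a1 b c) (P20 a1 a2 a) (Q00 a1 b c) (Q10 a1 a2 a)).
    { apply vec_ext; intros; unfold SA1, SA2, S1, S2, W1, W2, phiF, psiF, xiF, zetaF, thetaF,
        P00, P10, P20, Q00, Q10; cbv zeta; ring. }
    assert (EH : Hsol eta 0 k l a1 a2 C2 a b c b1 c1 =
       HA eta ((-1) ^ 0) k l a1 C2 (P00 a1 a2 a b1 c1) (P10 a1 b c) (P20 a1 a2 a) (Q00 a1 b c) (Q10 a1 a2 a)).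
    { apply vec_ext; intros; unfold SA1, SA2, S1, S2, W1, W2, phiF, psiF, xiF, zetaF, thetaF,
        P00, P10, P20, Q00, Q10; cbv zeta; ring. }
    rewrite EV, EH.
    exists (pA nu eta mu0 rho ((-1) ^ 0) k l a1 C1 C2 (Rz0 a1 a2 a b1 c1) (P00 a1 a2 a b1 c1) (P10 a1 b c) (P20 a1 a2 a) (Q00 a1 b c) (Q10 a1 a2 a)).
    destruct (smooth_abs nu eta mu0 rho _ k l a1 C1 C2 _ _ _ _ _ _ HO) as (A & B & C).
    split; [exact A|split; [exact B|split; [exact C|apply MHD_abs; auto]]].
  - assert (HO := ODE1 a1 a2 b c b1 c1).
    assert (EV : vsol nu 1 k l a1 a2 C1 a b c b1 c1 =
       vA nu ((-1) ^ 1) k l a1 C1 (P01 a1 a2 b1 c1) (P11 a1 b c) (P21 a1 a2) (Q01 a1 b c) (Q11 a1 a2)).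
    { apply vec_ext; intros; unfold SA1, SA2, S1, S2, W1, W2, phiF, psiF, xiF, zetaF, thetaF,
        P01, P11, P21, Q01, Q11; cbv zeta; ring. }
    assert (EH : Hsol eta 1 k l a1 a2 C2 a b c b1 c1 =
       HA eta ((-1) ^ 1) k l a1 C2 (P01 a1 a2 b1 c1) (P11 a1 b c) (P21 a1 a2) (Q01 a1 b c) (Q11 a1 a2)).
    { apply vec_ext; intros; unfold SA1, SA2, S1, S2, W1, W2, phiF, psiF, xiF, zetaF, thetaF,
        P01, P11, P21, Q01, Q11; cbv zeta; ring. }
    rewrite EV, EH.
    exists (pA nu eta mu0 rho ((-1) ^ 1) k l a1 C1 C2 (Rz1 a1 a2 b1 c1) (P01 a1 a2 b1 c1) (P11 a1 b c) (P21 a1 a2) (Q01 a1 b c) (Q11 a1 a2)).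
    destruct (smooth_abs nu eta mu0 rho _ k l a1 C1 C2 _ _ _ _ _ _ HO) as (A & B & C).
    split; [exact A|split; [exact B|split; [exact C|apply MHD_abs; auto]]].
Qed.
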